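(* Let $C'\subseteq\{0,1\}^n$ be nonempty, $J\subseteq[n]$ with $|J|\leq n/2$, and let $Q\subseteq[n]$ be a $J$-discerning set, i.e. $d_{TV}(U(C')[Q],U_J(C')[Q])\geq 1/8$. If $X\sim U(C')$, then $H[X[Q\setminus J]\mid X[J]]\leq |Q\setminus J|-0.0005$.
   Context: $[n]=\{1,\dots,n\}$; for $x\in\{0,1\}^n$ and $J\subseteq[n]$, $x[J]=(x_j)_{j\in J}$. $U(C')$ is the uniform distribution on $C'$, $U(C')[Q]$ the distribution of $X[Q]$ for $X\sim U(C')$. $U_J(C')$ is obtained by drawing $x\sim U(C')$ and replacing $x[[n]\setminus J]$ by an independent uniformly random vector; $U_J(C')[Q]$ is its restriction to $Q$. $d_{TV}(p,q)=\frac12\sum_a|p(a)-q(a)|$. $H$ is Shannon entropy (base 2) and $H[X\mid Y]=\sum_y\Pr[Y=y]H[X\mid Y=y]$. *)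

(* Defs.v *)
From HB Require Import structures.
From mathcomp Require Import all_boot all_order all_algebra.
From mathcomp Require Import all_classical all_reals all_analysis.
Set Implicit Arguments. Unset Strict Implicit. Unset Printing Implicit Defensive.
Import Order.TTheory GRing.Theory Num.Theory.
Local Open Scope ring_scope.

Notation cube n := {ffun 'I_n -> bool}.

(* x[Q], represented as an element of {0,1}^n with coordinates outside Q
   set to false (in bijection with {0,1}^Q). *)
Definition restr n (Q : {set 'I_n}) (x : cube n) : cube n :=
  [ffun i => if i \in Q then x i else false].

Definition mix n (J : {set 'I_n}) (x y : cube n) : cube n :=
  [ffun i => if i \in J then x i else y i].

Section Defs.
Variable R : realType.

Definition UQ n (C : {set cube n}) (Q : {set 'I_n}) (a : cube n) : R :=
  #|[set x in C | restr Q x == a]|%:R / #|C|%:R.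

(* U_J(C')[Q]: x ~ U(C'), y uniform on {0,1}^n independent *)
Definition UJQ n (C : {set cube n}) (J Q : {set 'I_n}) (a : cube n) : R :=
  (\sum_(x in C) \sum_(y : cube n) (restr Q (mix J x y) == a)%:R)
    / (#|C|%:R * #|{: cube n}|%:R).

Definition dTV (T : finType) (p q : T -> R) : R :=
  2^-1 * \sum_(a : T) `|p a - q a|.

Definition log2 (x : R) : R := ln x / ln 2.

Definition entropy (T : finType) (p : T -> R) : R :=
  - \sum_(a : T) (if p a == 0 then 0 else p a * log2 (p a)).

Definition PrJ n (C : {set cube n}) (J : {set 'I_n}) (b : cube n) : R :=
  #|[set x in C | restr J x == b]|%:R / #|C|%:R.

Definition condPr n (C : {set cube n}) (K J : {set 'I_n}) (b a : cube n) : R :=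
  #|[set x in C | (restr J x == b) && (restr K x == a)]|%:R
    / #|[set x in C | restr J x == b]|%:R.

Definition condH n (C : {set cube n}) (K J : {set 'I_n}) : R :=
  \sum_(b : cube n) PrJ C J b * entropy (condPr C K J b).

End Defs.

(* Main.v *)
Require Import Defs.
From HB Require Import structures.
From mathcomp Require Import all_boot all_order all_algebra.
From mathcomp Require Import all_classical all_reals all_analysis.
From mathcomp Require Import ring lra.
Import Order.TTheory GRing.Theory Num.Theory.
Local Open Scope ring_scope.

Section R1.
Variable R : realType.

Lemma ln_ge1V (x : R) : 0 < x -> 1 - x^-1 <= ln x.
Proof.
move=> x0.
have h := @le_ln1Dx R (x^-1 - 1).
have : -1 < x^-1 - 1 by have := invr_gt0 x; rewrite x0; lra.
move/h; rewrite addrC subrK lnV ?posrE //.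
lra.
Qed.

Lemma ln2_le1 : ln (2 : R) <= 1.
Proof. have := @le_ln1Dx R 1; rewrite (_ : 1 + 1 = 2) //; apply; lra. Qed.

Lemma ln2_gt0 : 0 < ln (2 : R).
Proof. apply: ln_gt0; lra. Qed.

Lemma keyL (p u : R) : 0 < p -> 0 < u ->
  (p - u) + 9^-1 * `|p - u| - 72^-1 * u <= p * ln (p / u).
Proof.
move=> p0 u0.
set s := Num.sqrt p; set v := Num.sqrt u.
have s0 : 0 < s by rewrite sqrtr_gt0.
have v0 : 0 < v by rewrite sqrtr_gt0.
have ps : p = s ^+ 2 by rewrite sqr_sqrtr // ltW.
have uv : u = v ^+ 2 by rewrite sqr_sqrtr // ltW.
have e : p / u = (s / v) ^+ 2 by rewrite ps uv expr_div_n.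
have sv0 : 0 < s / v by rewrite divr_gt0.
have hl : 2 * (1 - (s / v)^-1) <= ln (p / u).
  rewrite e lnXn // -mulr_natl; have := @ln_ge1V (s/v) sv0; lra.
have hv : (s / v)^-1 = v / s by rewrite invf_div.
rewrite hv in hl.
have : p * (2 * (1 - v / s)) <= p * ln (p / u) by rewrite ler_pM2l.
apply: le_trans.
have -> : p * (2 * (1 - v / s)) = 2 * s^+2 - 2 * s * v.
  rewrite ps; field; by rewrite gt_eqF.
rewrite ps uv.
case: (lerP v s) => hsv.
- rewrite ger0_norm; last by nra.
  have : 0 <= (8 * (s - v) - v) ^+ 2 by apply: sqr_ge0.
  nra.
- rewrite ltr0_norm; last by nra.
  have : 0 <= (10 * (s - v) + v) ^+ 2 by apply: sqr_ge0.
  have : 0 <= v ^+ 2 by apply: sqr_ge0.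
  nra.
Qed.
End R1.
Section Sums.
Variable R : realType.

Lemma card_sum (T : finType) (A : {set T}) (P : pred T) :
  #|[set x in A | P x]|%:R = \sum_(x in A) (P x)%:R :> R.
Proof.
rewrite -sum1_card natr_sum big_mkcond [RHS]big_mkcond /=.
apply: eq_bigr => x _; rewrite inE; by case: (x \in A); case: (P x).
Qed.

Lemma sum_ind (T : finType) (c : T) (G : T -> R) :
  \sum_(b : T) (c == b)%:R * G b = G c.
Proof.
rewrite (bigD1 c) //= eqxx mul1r big1 ?addr0 // => b hb.
by rewrite eq_sym (negbTE hb) mul0r.
Qed.

Lemma sum_fiber (I T : finType) (A : {set I}) (f : I -> T) (G : T -> R) :
  \sum_(b : T) (\sum_(x in A) (f x == b)%:R) * G b = \sum_(x in A) G (f x).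
Proof.
under eq_bigr do rewrite mulr_suml.
rewrite exchange_big /=; apply: eq_bigr => x _; exact: sum_ind.
Qed.

Lemma sum_fiber_prod (I1 I2 T1 T2 : finType) (A : {set I1}) (P : {set I2})
  (f : I1 -> T1) (g : I2 -> T2) (H : T1 -> T2 -> R) :
  \sum_(b : T1) \sum_(a : T2)
     (\sum_(x in A) (f x == b)%:R) * (\sum_(y in P) (g y == a)%:R) * H b a
  = \sum_(x in A) \sum_(y in P) H (f x) (g y).
Proof.
under eq_bigr do under eq_bigr do rewrite -mulrA.
under eq_bigr do rewrite -mulr_sumr.
rewrite sum_fiber; apply: eq_bigr => x _; exact: sum_fiber.
Qed.

Lemma sum_fiber2 (I T1 T2 : finType) (A : {set I})
  (f : I -> T1) (g : I -> T2) (H : T1 -> T2 -> R) :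
  \sum_(b : T1) \sum_(a : T2)
     (\sum_(x in A) ((f x == b) && (g x == a))%:R) * H b a
  = \sum_(x in A) H (f x) (g x).
Proof.
transitivity (\sum_(b : T1) \sum_(a : T2) \sum_(x in A)
   (f x == b)%:R * ((g x == a)%:R * H b a)).
  apply: eq_bigr => b _; apply: eq_bigr => a _; rewrite mulr_suml.
  apply: eq_bigr => x _; rewrite mulrA; congr (_ * _).
  by case: (f x == b); case: (g x == a); rewrite /= ?mulr1 ?mulr0 ?mul0r.
under eq_bigr do rewrite exchange_big /=.
rewrite exchange_big /=; apply: eq_bigr => x _.
under eq_bigr do rewrite -mulr_sumr.
rewrite sum_ind; exact: sum_ind.
Qed.

Lemma sum_abs_push (T1 T2 T3 : finType) (F : T1 -> T2 -> T3) (g : T1 -> T2 -> R) :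
  \sum_(c : T3) `| \sum_(b : T1) \sum_(a : T2) g b a * (F b a == c)%:R |
  <= \sum_(b : T1) \sum_(a : T2) `|g b a|.
Proof.
apply: (@le_trans _ _ (\sum_(c : T3) \sum_(b : T1) \sum_(a : T2)
      `|g b a| * (F b a == c)%:R)).
  apply: ler_sum => c _; apply: (le_trans (ler_norm_sum _ _ _)).
  apply: ler_sum => b _; apply: (le_trans (ler_norm_sum _ _ _)).
  apply: ler_sum => a _; by rewrite normrM normr_nat.
rewrite exchange_big /=; apply: ler_sum => b _.
rewrite exchange_big /=; apply: ler_sum => a _.
rewrite -mulr_sumr.
have -> : \sum_(c : T3) (F b a == c)%:R = 1 :> R.
  by have := @sum_ind T3 (F b a) (fun _ => 1); under eq_bigr do rewrite mulr1.
by rewrite mulr1.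
Qed.
Lemma sum_fiberT (I T : finType) (f : I -> T) (G : T -> R) :
  \sum_(b : T) (\sum_(x : I) (f x == b)%:R) * G b = \sum_(x : I) G (f x).
Proof.
under eq_bigr do rewrite mulr_suml.
rewrite exchange_big /=; apply: eq_bigr => x _; exact: sum_ind.
Qed.

Lemma card_sumT (T : finType) (P : pred T) :
  #|[set x : T | P x]|%:R = \sum_(x : T) (P x)%:R :> R.
Proof.
rewrite -sum1_card natr_sum big_mkcond /=.
apply: eq_bigr => x _; rewrite inE; by case: (P x).
Qed.

Lemma sum_fiber_prodT (I1 I2 T1 T2 : finType) (A : {set I1})
  (f : I1 -> T1) (g : I2 -> T2) (H : T1 -> T2 -> R) :
  \sum_(b : T1) \sum_(a : T2)
     (\sum_(x in A) (f x == b)%:R) * (\sum_(y : I2) (g y == a)%:R) * H b a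
  = \sum_(x in A) \sum_(y : I2) H (f x) (g y).
Proof.
under eq_bigr do under eq_bigr do rewrite -mulrA.
under eq_bigr do rewrite -mulr_sumr.
rewrite sum_fiber; apply: eq_bigr => x _; exact: sum_fiberT.
Qed.

Lemma sum_and (I T1 T2 : finType) (A : {set I}) (f : I -> T1) (g : I -> T2) b :
  \sum_(a : T2) \sum_(x in A) ((f x == b) && (g x == a))%:R
  = \sum_(x in A) (f x == b)%:R :> R.
Proof.
rewrite exchange_big /=; apply: eq_bigr => x _.
case: (f x == b) => /=; last by rewrite big1.
rewrite -[RHS](@sum_ind T2 (g x) (fun _ => 1)); apply: eq_bigr => a _; by rewrite mulr1.
Qed.

Lemma sum_lin (T : finType) (p u w : T -> R) (c1 c2 : R) :
  \sum_(a : T) (p a - u a + c1 * w a - c2 * u a)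
  = \sum_(a : T) p a - \sum_(a : T) u a + c1 * \sum_(a : T) w a - c2 * \sum_(a : T) u a.
Proof. by rewrite !big_split /= !sumrN !mulr_sumr. Qed.

Lemma sum_lin2 (T : finType) (t p : T -> R) (c d : R) :
  \sum_(a : T) (t a * c + p a * d) = (\sum_(a : T) t a) * c + (\sum_(a : T) p a) * d.
Proof. by rewrite big_split /= !mulr_suml. Qed.

Lemma sum_lin3 (T : finType) (x y : T -> R) (c d1 d2 : R) :
  \sum_(a : T) c * (d1 * x a - d2 * y a)
  = c * (d1 * \sum_(a : T) x a - d2 * \sum_(a : T) y a).
Proof. by rewrite -mulr_sumr big_split /= sumrN !mulr_sumr. Qed.

Lemma sum_lin4 (T : finType) (q h : T -> R) (k L : R) :
  \sum_(a : T) q a * ((k - h a) * L)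
  = (k * \sum_(a : T) q a - \sum_(a : T) q a * h a) * L.
Proof.
rewrite mulr_sumr -sumrB mulr_suml; apply: eq_bigr => a _; ring.
Qed.
End Sums.
Section Cube.
Variable n : nat.
Implicit Types (J Q K : {set 'I_n}) (x y a : cube n).

Lemma F_eq J Q x y :
  restr Q (mix J (restr J x) (restr (Q :\: J) y)) = restr Q (mix J x y).
Proof.
apply/ffunP => i; rewrite /restr /mix !ffunE.
case iQ: (i \in Q) => //.
case iJ: (i \in J); rewrite ?inE ?iJ ?iQ //.
Qed.

Lemma mix_same J x : mix J x x = x.
Proof. by apply/ffunP => i; rewrite ffunE; case: (i \in J). Qed.

Definition z0 : cube n := [ffun => false].

Lemma fiber_le K a : restr K a = a ->
  (#|[set y : cube n | restr K y == z0]| <= #|[set y : cube n | restr K y == a]|)%N.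
Proof.
move=> ha.
rewrite -(@card_in_imset _ _ (mix K a)); last first.
  move=> y1 y2; rewrite !inE => /eqP h1 /eqP h2 e.
  apply/ffunP => i; have := congr1 (fun f : cube n => f i) e; rewrite /mix /restr !ffunE.
  case iK: (i \in K) => // _.
  have := congr1 (fun f : cube n => f i) h1; have := congr1 (fun f : cube n => f i) h2.
  by rewrite !ffunE iK => -> ->.
apply: fintype.subset_leq_card; apply/fintype.subsetP => z /imsetP [y _ ->].
rewrite inE; apply/eqP; apply/ffunP => i.
have := congr1 (fun f : cube n => f i) ha; rewrite /mix /restr !ffunE.
by case iK: (i \in K).
Qed.

Lemma total_le K :
  (#|{: cube n}| <= #|[set y : cube n | restr K y == z0]| * 2 ^ #|K|)%N.
Proof.
pose h (y : cube n) := (mix K z0 y, [set i in K | y i]).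
have hinj : injective h.
  move=> y1 y2 [e1 e2]; apply/ffunP => i.
  have := congr1 (fun f : cube n => f i) e1; rewrite /mix /restr !ffunE.
  case iK: (i \in K) => //= _.
  have := congr1 (fun S : {set 'I_n} => i \in S) e2; by rewrite !inE iK.
rewrite -cardsT -(card_imset _ hinj) -card_powerset -cardsX.
apply: fintype.subset_leq_card; apply/fintype.subsetP => p /imsetP [y _ ->].
rewrite !inE /=; apply/andP; split.
  apply/eqP/ffunP => i; rewrite !ffunE; by case: (i \in K).
apply/fintype.subsetP => i; rewrite inE; by case/andP.
Qed.

Lemma card_cube : #|{: cube n}| = (2 ^ n)%N.
Proof. by rewrite card_ffun card_bool card_ord. Qed.

End Cube.

Section Main.
Variable R : realType.
Variable n : nat.
Variables (C : {set cube n}) (J Q : {set 'I_n}).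
Hypothesis C0 : (0 < #|C|)%N.

Definition K := Q :\: J.
Definition MM : R := #|C|%:R.
Definition NN : R := #|{: cube n}|%:R.
Definition mb (b : cube n) : R := #|[set x in C | restr J x == b]|%:R.
Definition m (b a : cube n) : R :=
  #|[set x in C | (restr J x == b) && (restr K x == a)]|%:R.
Definition e (a : cube n) : R := #|[set y : cube n | restr K y == a]|%:R.
Definition u a := e a / NN.
Definition g b a := m b a - mb b * u a.
Definition Fm (b a : cube n) := restr Q (mix J b a).

Lemma MM_gt0 : 0 < MM. Proof. by rewrite /MM ltr0n. Qed.
Lemma NN_gt0 : 0 < NN. Proof. by rewrite /NN ltr0n card_cube expn_gt0. Qed.

Lemma UQ_eq c : UQ R C Q c = MM^-1 * \sum_b \sum_a m b a * (Fm b a == c)%:R.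
Proof.
rewrite /UQ card_sum mulrC; congr (_ * _).
symmetry; rewrite /m; under eq_bigr do under eq_bigr do rewrite card_sum.
rewrite (@sum_fiber2 R _ _ _ C (restr J) (restr K) (fun b a => (Fm b a == c)%:R)).
by apply: eq_bigr => x _; rewrite /Fm F_eq mix_same.
Qed.

Lemma UJQ_eq c : UJQ R C J Q c =
  MM^-1 * \sum_b \sum_a mb b * u a * (Fm b a == c)%:R.
Proof.
rewrite /UJQ invfM mulrC -mulrA; congr (_ * _).
rewrite mulr_sumr.
have -> : \sum_b \sum_a mb b * u a * (Fm b a == c)%:R =
   \sum_b \sum_a (\sum_(x in C) (restr J x == b)%:R) *
      (\sum_(y : cube n) (restr K y == a)%:R) * (NN^-1 * (Fm b a == c)%:R).
  apply: eq_bigr => b _; apply: eq_bigr => a _.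
  rewrite /mb /u /e card_sum card_sumT /NN; rewrite !mulrA; congr (_ * _).
symmetry; rewrite sum_fiber_prodT; apply: eq_bigr => x _.
rewrite -mulr_sumr /NN; congr (_ * _); apply: eq_bigr => y _.
by rewrite /Fm F_eq.
Qed.

Lemma tv_bound : \sum_c `|UQ R C Q c - UJQ R C J Q c| <= MM^-1 * \sum_b \sum_a `|g b a|.
Proof.
have -> : \sum_c `|UQ R C Q c - UJQ R C J Q c| =
   MM^-1 * \sum_c `|\sum_b \sum_a g b a * (Fm b a == c)%:R|.
  rewrite mulr_sumr; apply: eq_bigr => c _.
  rewrite UQ_eq UJQ_eq -mulrBr normrM ger0_norm; last by rewrite invr_ge0 ltW ?MM_gt0.
  congr (_ * `|_|); rewrite -sumrB; apply: eq_bigr => b _.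
  rewrite -sumrB; apply: eq_bigr => a _; by rewrite /g mulrBl.
apply: ler_wpM2l; first by rewrite invr_ge0 ltW ?MM_gt0.
exact: (@sum_abs_push R _ _ _ Fm g).
Qed.

Lemma sum_m b : \sum_a m b a = mb b.
Proof.
rewrite /m /mb card_sum; under eq_bigr do rewrite card_sum.
exact: (@sum_and R).
Qed.

Lemma sum_mb : \sum_b mb b = MM.
Proof.
rewrite /mb /MM.
transitivity (\sum_b (\sum_(x in C) (restr J x == b)%:R) * (1 : R)).
  by apply: eq_bigr => b _; rewrite card_sum mulr1.
rewrite (@sum_fiber R _ _ C (restr J) (fun _ => 1)).
by rewrite -sum1_card natr_sum.
Qed.

Lemma sum_e : \sum_a e a = NN.
Proof.
rewrite /e /NN.
transitivity (\sum_a (\sum_(y : cube n) (restr K y == a)%:R) * (1 : R)).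
  by apply: eq_bigr => a _; rewrite card_sumT mulr1.
rewrite (@sum_fiberT R _ _ (restr K) (fun _ => 1)).
by rewrite -sum1_card natr_sum.
Qed.

Lemma sum_u : \sum_a u a = 1.
Proof. rewrite /u -mulr_suml sum_e mulfV //; exact: lt0r_neq0 NN_gt0. Qed.

Lemma m_le b a : m b a <= mb b.
Proof.
rewrite /m /mb ler_nat; apply: fintype.subset_leq_card.
apply/fintype.subsetP => x; rewrite !inE; by case/andP=> -> /andP [-> _].
Qed.

Lemma restr_idem (L : {set 'I_n}) x : restr L (restr L x) = restr L x.
Proof. apply/ffunP => i; rewrite /restr !ffunE; by case: (i \in L). Qed.

Lemma m_pos_u b a : 0 < m b a -> 1 <= u a * 2 ^+ #|K|.
Proof.
rewrite /m ltr0n card_gt0 => /set0Pn [x]; rewrite inE => /andP [_ /andP [_ /eqP hx]].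
have ha : restr K a = a by rewrite -hx restr_idem.
have h1 := @total_le n K; have h2 := @fiber_le n K a ha.
have h3 : (#|{: cube n}| <= #|[set y : cube n | restr K y == a]| * 2 ^ #|K|)%N.
  apply: (leq_trans h1); by rewrite leq_mul2r h2 orbT.
have h4 : NN <= e a * 2 ^+ #|K|.
  by rewrite /NN /e -natrX -natrM ler_nat.
rewrite /u mulrAC ler_pdivlMr ?NN_gt0 // mul1r //.
Qed.

Lemma per_a b a : 0 < mb b ->
  (condPr R C K J b a - u a) + 9^-1 * `|condPr R C K J b a - u a| - 72^-1 * u a
  <= (if condPr R C K J b a == 0 then 0 else condPr R C K J b a * log2 (condPr R C K J b a)) * ln 2
     + condPr R C K J b a * (#|K|%:R * ln 2).
Proof.
move=> hb.
set p := condPr R C K J b a.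
have pe : p = m b a / mb b by [].
have p0 : 0 <= p by rewrite pe divr_ge0 ?ler0n // ltW.
have u0 : 0 <= u a by rewrite /u divr_ge0 ?ler0n // ltW ?NN_gt0.
case: eqP => [->|hp].
  rewrite mul0r add0r add0r normrN ger0_norm //; lra.
have pp : 0 < p by rewrite lt_neqAle eq_sym p0 andbT; apply/eqP.
have mpos : 0 < m b a.
  have -> : m b a = p * mb b by rewrite pe divfK // gt_eqF.
  exact: mulr_gt0.
have hu := @m_pos_u b a mpos.
have k0 : 0 < (2 : R) ^+ #|K| by apply: exprn_gt0.
have upos : 0 < u a.
  rewrite lt_neqAle u0 andbT; apply/negP => /eqP h; move: hu; rewrite -h mul0r; lra.
have l2 := @ln2_gt0 R.
have -> : p * log2 p * ln 2 = p * ln p by rewrite /log2 -mulrA divfK // gt_eqF.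
have hk : 0 <= ln (u a) + #|K|%:R * ln 2.
  rewrite mulr_natl -lnXn; last by [].
  rewrite -lnM ?posrE //; exact: ln_ge0.
have := @keyL R p (u a) pp upos.
rewrite ln_div ?posrE //.
nra.
Qed.

Lemma per_b b :
  MM^-1 * (9^-1 * \sum_a `|g b a| - 72^-1 * mb b)
  <= PrJ R C J b * ((#|K|%:R - entropy (condPr R C K J b)) * ln 2).
Proof.
have pj : PrJ R C J b = mb b / MM by [].
have mb0 : 0 <= mb b by rewrite ler0n.
have M0 := MM_gt0.
case: (eqVneq (mb b) 0) => hb.
  have g0 : forall a, g b a = 0.
    move=> a; have := m_le b a; rewrite /g hb mul0r subr0 => h.
    by apply/eqP; rewrite eq_le h ler0n.
  rewrite pj hb mul0r mulr0 mul0r; under eq_bigr do rewrite g0 normr0.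
  by rewrite big1 // mulr0 subr0 mulr0.
have hbp : 0 < mb b by rewrite lt_neqAle eq_sym hb.
set p := condPr R C K J b.
have pe : forall a, p a = m b a / mb b by [].
have sp : \sum_a p a = 1.
  under eq_bigr do rewrite pe. rewrite -mulr_suml sum_m; exact: divff.
have sg : \sum_a `|g b a| = mb b * \sum_a `|p a - u a|.
  rewrite mulr_sumr; apply: eq_bigr => a _.
  rewrite -(ger0_norm mb0) -normrM /g mulrBr pe; congr (`|_|); congr (_ - _); field; exact: hb.
have H1 : \sum_a ((p a - u a) + 9^-1 * `|p a - u a| - 72^-1 * u a)
  <= \sum_a ((if p a == 0 then 0 else p a * log2 (p a)) * ln 2 + p a * (#|K|%:R * ln 2)).
  by apply: ler_sum => a _; exact: per_a.
rewrite (@sum_lin R _ p u (fun a => `|p a - u a|)) in H1.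
rewrite (@sum_lin2 R _ (fun a => if p a == 0 then 0 else p a * log2 (p a)) p) sp sum_u in H1.
rewrite pj sg /entropy -/p.
set S := \sum_a `|p a - u a|.
set T := \sum_a (if p a == 0 then 0 else p a * log2 (p a)).
have -> : MM^-1 * (9^-1 * (mb b * S) - 72^-1 * mb b) = mb b / MM * (9^-1 * S - 72^-1).
  by field; rewrite gt_eqF.
apply: ler_wpM2l; first by rewrite divr_ge0 // ltW.
move: H1; rewrite -/S -/T; set L := ln 2; nra.
Qed.
End Main.

Theorem lemma10 (R : realType) (n : nat) (C : {set cube n}) (J Q : {set 'I_n}) :
  (0 < #|C|)%N ->
  (2 * #|J| <= n)%N ->
  dTV (UQ R C Q) (UJQ R C J Q) >= 8^-1 ->
  condH R C (Q :\: J) J <= #|Q :\: J|%:R - 5 / 10000.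
Proof.
move=> C0 _ hd.
have M0 := @MM_gt0 R n C C0.
have tv := @tv_bound R n C J Q C0.
rewrite /dTV in hd.
have hpb : forall b, (MM R n C)^-1 * (9^-1 * \sum_a `|g R n C J Q b a| - 72^-1 * mb R n C J b)
  <= PrJ R C J b * ((#|K n J Q|%:R - entropy (condPr R C (K n J Q) J b)) * ln 2).
  move=> b; exact: (@per_b R n C J Q C0 b).
have hs : \sum_b (MM R n C)^-1 * (9^-1 * \sum_a `|g R n C J Q b a| - 72^-1 * mb R n C J b)
  <= \sum_b PrJ R C J b * ((#|K n J Q|%:R - entropy (condPr R C (K n J Q) J b)) * ln 2).
  by apply: ler_sum => b _; exact: hpb.
rewrite (@sum_lin3 R _ (fun b => \sum_a `|g R n C J Q b a|) (mb R n C J)) in hs.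
rewrite (@sum_lin4 R _ (PrJ R C J) (fun b => entropy (condPr R C (K n J Q) J b))) in hs.
have spj : \sum_b PrJ R C J b = 1.
  rewrite /PrJ -mulr_suml; have := @sum_mb R n C J; rewrite /mb /MM => ->.
  by rewrite divff // gt_eqF.
rewrite spj (@sum_mb R n C J) in hs.
change (condH R C (K n J Q) J <= #|K n J Q|%:R - 5 / 10000).
rewrite -/(condH R C (K n J Q) J) in hs.
set X := \sum_b \sum_a `|g R n C J Q b a| in hs tv.
set S := \sum_a `|UQ R C Q a - UJQ R C J Q a| in hd tv.
set H := condH R C (K n J Q) J in hs *.
set k := #|K n J Q|%:R in hs *.
have E : (MM R n C)^-1 * (9^-1 * X - 72^-1 * MM R n C) = 9^-1 * ((MM R n C)^-1 * X) - 72^-1.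
  by field; rewrite gt_eqF.
rewrite E in hs.
have l1 := @ln2_le1 R; have l0 := @ln2_gt0 R.
move: hs tv hd l1 l0; set L := ln 2; set Y := (MM R n C)^-1 * X.
move=> hs tv hd l1 l0.
have h1 : 72^-1 <= (k - H) * L by lra.
nra.
Qed.
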